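(* For every $i\in[d]$, all $r\in[m]$, any constant $c_1\ge10$, and every $x_{1:i}$ with $\|x_{1:i}\|_2\le\frac12$, with probability at least $1-\frac1{c_1}$ over the random initialization, the change in weights after $t$ SGD steps with learning rate $\eta$ satisfies $$\|w^{(t)}_{i,r}\|_2\le\eta\bar\Lambda t,\qquad |b^{(t)}_{i,r}|\le\eta\bar\Lambda t,\qquad\text{where }\bar\Lambda=6c_1\epsilon_a\sqrt{2\log m}.$$
   Context: UNF setting. Fix $d\ge1$, $m\ge2$, $\epsilon_a>0$, $Q\ge1$. For $\|x_{1:i}\|_2\le1$, $\hat x_{1:i}=(x_1,\dots,x_i,\sqrt{1-\|x_{1:i}\|_2^2})$. $\sigma(u)=\max\{u,0\}$ with $\sigma'(u)=\mathbf 1\{u\ge0\}$; $\phi(u)=e^u$ ($u<0$), $u+1$ ($u\ge0$). Frozen random initial parameters $a_{i,r}\sim\mathcal N(0,\epsilon_a^2)$, $\bar w_{i,r}\sim\mathcal N(0,\frac1mI_{i+1})$, $\bar b_{i,r}\sim\mathcal N(0,\frac1m)$, independent. Offsets $\theta_i=(w_{i,r},b_{i,r})_{r\in[m]}$, $\theta^{(0)}=0$. $N(x_{1:i};\theta_i)=\sum_ra_{i,r}\sigma(\langle\bar w_{i,r}+w_{i,r},\hat x_{1:i}\rangle+\bar b_{i,r}+b_{i,r})$, $\frac{\partial f_i}{\partial x_i}=\phi(N(\cdot;\theta_i))$. Quadrature: $\Delta_{x_i}=(x_i+1)/Q$, $q^{(j)}_i=(x_1,\dots,x_{i-1},-1+j\Delta_{x_i})$.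 Approximate loss $\tilde L(\nabla f,x)=\sum_{i}\big(\sum_{j=1}^Q\Delta_{x_i}\phi(N(q^{(j)}_i;\theta_i))-\log\phi(N(x_{1:i};\theta_i))\big)$. SGD: $\theta^{(t+1)}=\theta^{(t)}-\eta\nabla_\theta\tilde L(\nabla f^{(t)},x^{(t)})$ with $x^{(t)}$ drawn uniformly from a training set of points in the unit ball, where $f^{(t)}$ uses $\theta^{(t)}$; $w^{(t)}_{i,r},b^{(t)}_{i,r}$ are the components of $\theta^{(t)}$. *)

(* Defs.v *)
From HB Require Import structures.
From mathcomp Require Import all_boot all_order all_algebra.
From mathcomp Require Import all_classical all_reals all_analysis.
Set Implicit Arguments.
Unset Strict Implicit.
Unset Printing Implicit Defensive.
Import Order.TTheory GRing.Theory Num.Theory.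
Local Open Scope classical_set_scope.
Local Open Scope ring_scope.

(* Index convention: the paper's block i in [d] (1-based) is k : 'I_d with
   i = k.+1.  Thus x_{1:i} : 'rV_(k.+1) and \hat x_{1:i}, w_{i,r} : 'rV_(k.+2). *)

Section Net.
Variable R : realType.

Definition norm2 n (v : 'rV[R]_n) : R := Num.sqrt (\sum_(j < n) v 0 j ^+ 2).

Definition hatv n (x : 'rV[R]_n.+1) : 'rV[R]_n.+2 :=
  \row_(j < n.+2) (if (j < n.+1)%N then x 0 (inord j)
                   else Num.sqrt (1 - norm2 x ^+ 2)).

Definition prefix d (k : 'I_d) (x : 'rV[R]_d) : 'rV[R]_k.+1 :=
  \row_(j < k.+1) x 0 (widen_ord (ltn_ord k) j).

Definition sigma (u : R) : R := Num.max u 0.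
Definition dsigma (u : R) : R := if 0 <= u then 1 else 0.
Definition phi (u : R) : R := if u < 0 then expR u else u + 1.
Definition dphi (u : R) : R := if u < 0 then expR u else 1.

(* Offsets of block k: theta_k r = (w_{k,r}, b_{k,r}) *)
Definition block (n m : nat) := 'I_m -> 'rV[R]_n * R.

Section Block.
Variables (n m : nat).
Variables (a : 'I_m -> R) (wb : 'I_m -> 'rV[R]_n) (bb : 'I_m -> R).

Definition preact (th : block n m) (r : 'I_m) (z : 'rV[R]_n) : R :=
  \sum_(j < n) (wb r 0 j + (th r).1 0 j) * z 0 j + bb r + (th r).2.

Definition Nnet (th : block n m) (z : 'rV[R]_n) : R :=
  \sum_(r < m) a r * sigma (preact th r z).
End Block.

Section Loss.
Variables (k m Q : nat).
Variables (a : 'I_m -> R) (wb : 'I_m -> 'rV[R]_k.+2) (bb : 'I_m -> R).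

Definition Delta (x : 'rV[R]_k.+1) : R := (x 0 ord_max + 1) / Q%:R.

Definition quadpt (x : 'rV[R]_k.+1) (j : nat) : 'rV[R]_k.+1 :=
  \row_(l < k.+1) (if (l < k)%N then x 0 l else -1 + j%:R * Delta x).

Definition Ltilde_i (th : block k.+2 m) (x : 'rV[R]_k.+1) : R :=
  \sum_(1 <= j < Q.+1) Delta x * phi (Nnet a wb bb th (hatv (quadpt x j)))
  - ln (phi (Nnet a wb bb th (hatv x))).

Definition gradw (th : block k.+2 m) (x : 'rV[R]_k.+1) (r : 'I_m) : 'rV[R]_k.+2 :=
  \sum_(1 <= j < Q.+1)
     (Delta x * dphi (Nnet a wb bb th (hatv (quadpt x j))) * a r
        * dsigma (preact wb bb th r (hatv (quadpt x j)))) *: hatv (quadpt x j)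
  - (dphi (Nnet a wb bb th (hatv x)) / phi (Nnet a wb bb th (hatv x)) * a r
        * dsigma (preact wb bb th r (hatv x))) *: hatv x.

Definition gradb (th : block k.+2 m) (x : 'rV[R]_k.+1) (r : 'I_m) : R :=
  \sum_(1 <= j < Q.+1)
     (Delta x * dphi (Nnet a wb bb th (hatv (quadpt x j))) * a r
        * dsigma (preact wb bb th r (hatv (quadpt x j))))
  - (dphi (Nnet a wb bb th (hatv x)) / phi (Nnet a wb bb th (hatv x)) * a r
        * dsigma (preact wb bb th r (hatv x))).
End Loss.

Section SGD.
Variables (d m Q : nat).
Variables (a : 'I_d -> 'I_m -> R) (wb : forall k : 'I_d, 'I_m -> 'rV[R]_k.+2)
          (bb : 'I_d -> 'I_m -> R).

Definition params := forall k : 'I_d, block k.+2 m.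

Definition Ltilde (th : params) (x : 'rV[R]_d) : R :=
  \sum_(k < d) Ltilde_i Q (a k) (wb k) (bb k) (th k) (prefix k x).

(* gradient of Ltilde w.r.t. theta: the k-th summand only depends on theta_k *)
Definition gradL (th : params) (x : 'rV[R]_d) : params :=
  fun k r => (gradw Q (a k) (wb k) (bb k) (th k) (prefix k x) r,
              gradb Q (a k) (wb k) (bb k) (th k) (prefix k x) r).

Fixpoint sgd (eta : R) (xs : nat -> 'rV[R]_d) (t : nat) : params :=
  match t with
  | 0 => fun k r => (0, 0)
  | t'.+1 => let th := sgd eta xs t' in
             fun k r => ((th k r).1 - eta *: (gradL th (xs t') k r).1,
                         (th k r).2 - eta * (gradL th (xs t') k r).2)
  end.
End SGD.

End Net.

Inductive init_idx (d m : nat) : Type :=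
| IA : 'I_d -> 'I_m -> init_idx d m
| IW : forall k : 'I_d, 'I_m -> 'I_k.+2 -> init_idx d m
| IB : 'I_d -> 'I_m -> init_idx d m.
Arguments IA {d m} k r.
Arguments IW {d m} k r j.
Arguments IB {d m} k r.

Section Prob.
Local Open Scope ereal_scope.
Context {R : realType} {dsp : measure_display} {T : measurableType dsp}.

Definition mutually_independent (I : Type) (P : probability T R)
    (X : I -> T -> R) : Prop :=
  forall (n : nat) (f : 'I_n -> I), injective f ->
  forall B : 'I_n -> set R, (forall l, measurable (B l)) ->
  P (\bigcap_(l in [set: 'I_n]) (X (f l) @^-1` B l))
  = \prod_(l < n) P (X (f l) @^-1` B l).

Definition gaussian0 (P : probability T R) (X : T -> R) (v : R) : Prop :=
  measurable_fun setT X /\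
  forall B : set R, measurable B -> P (X @^-1` B) = normal_prob 0 (Num.sqrt v) B.
End Prob.

Definition init_a {R : realType} {T : Type} d m (X : init_idx d m -> T -> R) (w : T)
  : 'I_d -> 'I_m -> R := fun k r => X (IA k r) w.
Definition init_w {R : realType} {T : Type} d m (X : init_idx d m -> T -> R) (w : T)
  : forall k : 'I_d, 'I_m -> 'rV[R]_k.+2 := fun k r => \row_j X (IW k r j) w.
Definition init_b {R : realType} {T : Type} d m (X : init_idx d m -> T -> R) (w : T)
  : 'I_d -> 'I_m -> R := fun k r => X (IB k r) w.

(* Main.v *)
Require Import Defs.
From HB Require Import structures.
From mathcomp Require Import all_boot all_order all_algebra.
From mathcomp Require Import all_classical all_reals all_analysis.
From mathcomp Require Import measurable_realfun lebesgue_integral.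
From mathcomp.algebra_tactics Require Import ring lra.
Import Order.TTheory GRing.Theory Num.Theory.
Set Implicit Arguments.
Unset Strict Implicit.
Local Open Scope ring_scope.

Section Norms.
Variable R : realType.

Definition ns2 n (v : 'rV[R]_n) : R := \sum_(j < n) v 0 j ^+ 2.

Lemma ns2_ge0 n (v : 'rV[R]_n) : 0 <= ns2 v.
Proof. by apply: sumr_ge0 => j _; rewrite sqr_ge0. Qed.

Lemma norm2E n (v : 'rV[R]_n) : norm2 v = Num.sqrt (ns2 v).
Proof. by []. Qed.

Lemma norm2_ge0 n (v : 'rV[R]_n) : 0 <= norm2 v.
Proof. exact: sqrtr_ge0. Qed.

Lemma sqr_norm2 n (v : 'rV[R]_n) : norm2 v ^+ 2 = ns2 v.
Proof. by rewrite norm2E sqr_sqrtr // ns2_ge0. Qed.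

Lemma norm2_le n (v : 'rV[R]_n) (c : R) : 0 <= c -> ns2 v <= c ^+ 2 -> norm2 v <= c.
Proof.
move=> c0 h; rewrite norm2E -(ger0_norm c0) -sqrtr_sqr ler_sqrt //.
exact: sqr_ge0.
Qed.

Lemma dot_le n (u v : 'rV[R]_n) :
  \sum_(j < n) u 0 j * v 0 j <= norm2 u * norm2 v.
Proof.
set a := norm2 u; set b := norm2 v.
have a0 : 0 <= a := norm2_ge0 u.
have b0 : 0 <= b := norm2_ge0 v.
have [a0'|apos] := eqVneq a 0.
  have hu : forall j, u 0 j = 0.
    move=> j; have : ns2 u = 0 by rewrite -sqr_norm2 -/a a0' expr0n.
    move/eqP; rewrite psumr_eq0; last by move=> i _; rewrite sqr_ge0.
    by move/allP => /(_ j (mem_index_enum _)) /=; rewrite sqrf_eq0 => /eqP.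
  by rewrite a0' mul0r big1 // => j _; rewrite hu mul0r.
have [b0'|bpos] := eqVneq b 0.
  have hv : forall j, v 0 j = 0.
    move=> j; have : ns2 v = 0 by rewrite -sqr_norm2 -/b b0' expr0n.
    move/eqP; rewrite psumr_eq0; last by move=> i _; rewrite sqr_ge0.
    by move/allP => /(_ j (mem_index_enum _)) /=; rewrite sqrf_eq0 => /eqP.
  by rewrite b0' mulr0 big1 // => j _; rewrite hv mulr0.
have key : 0 <= \sum_(j < n) (u 0 j * b - v 0 j * a) ^+ 2.
  by apply: sumr_ge0 => j _; rewrite sqr_ge0.
have E : \sum_(j < n) (u 0 j * b - v 0 j * a) ^+ 2 =
   b ^+ 2 * ns2 u - 2 * a * b * (\sum_(j < n) u 0 j * v 0 j) + a ^+ 2 * ns2 v.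
  rewrite /ns2 !mulr_sumr -sumrN -!big_split /=.
  by apply: eq_bigr => j _; ring.
rewrite E !sqr_norm2 -/a -/b in key.
rewrite -!sqr_norm2 -/a -/b in key.
have abpos : 0 < a * b by rewrite mulr_gt0 // lt0r ?apos ?bpos.
set S := \sum_(j < n) u 0 j * v 0 j in key *.
have : 2 * (a * b) * S <= 2 * (a * b) * (a * b) by nra.
by rewrite ler_pM2l //; nra.
Qed.

Lemma norm2D n (u v : 'rV[R]_n) : norm2 (u + v) <= norm2 u + norm2 v.
Proof.
apply: norm2_le; first by rewrite addr_ge0 ?norm2_ge0.
have h := dot_le u v.
have E : ns2 (u + v) = ns2 u + 2 * (\sum_(j < n) u 0 j * v 0 j) + ns2 v.
  rewrite /ns2 mulr_sumr -!big_split /=.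
  by apply: eq_bigr => j _; rewrite !mxE; ring.
rewrite E -!sqr_norm2; nra.
Qed.

Lemma norm2Z n c (v : 'rV[R]_n) : norm2 (c *: v) = `|c| * norm2 v.
Proof.
rewrite !norm2E -sqrtr_sqr -sqrtrM ?sqr_ge0 //; congr Num.sqrt.
by rewrite /ns2 mulr_sumr; apply: eq_bigr => j _; rewrite !mxE exprMn.
Qed.

Lemma norm2B n (u v : 'rV[R]_n) : norm2 (u - v) <= norm2 u + norm2 v.
Proof.
apply: le_trans (norm2D _ _) _.
by rewrite -scaleN1r norm2Z normrN normr1 mul1r.
Qed.

Lemma norm2_0 n : norm2 (0 : 'rV[R]_n) = 0.
Proof.
by rewrite norm2E /ns2 big1 ?sqrtr0 // => j _; rewrite mxE expr0n.
Qed.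

Lemma norm2_sum n (I : Type) (r : seq I) (P : pred I) (F : I -> 'rV[R]_n) :
  norm2 (\sum_(i <- r | P i) F i) <= \sum_(i <- r | P i) norm2 (F i).
Proof.
apply: (big_ind2 (fun v y => norm2 v <= y)).
- by rewrite norm2_0.
- move=> x1 x2 y1 y2 h1 h2; apply: le_trans (norm2D _ _) _; exact: lerD.
- by [].
Qed.

End Norms.
Section Grad.
Variable R : realType.

Lemma sqrt_sqr_le1 (y : R) : y <= 1 -> Num.sqrt y ^+ 2 <= 1.
Proof.
move=> y1; have [y0|y0] := leP 0 y; first by rewrite sqr_sqrtr.
by rewrite ltr0_sqrtr // expr0n ler01.
Qed.

Lemma hatv_ns2 n (z : 'rV[R]_n.+1) : ns2 (hatv z) <= ns2 z + 1.
Proof.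
rewrite /ns2 big_ord_recr /= (eq_bigr (fun i : 'I_n.+1 => z 0 i ^+ 2)); last first.
  move=> i _; rewrite mxE /= ltn_ord.
  by congr (_ ^+ 2); congr (z 0 _); apply: val_inj; rewrite /= inordK.
apply: lerD => //.
rewrite mxE /= ltnn; apply: sqrt_sqr_le1.
by rewrite lerBlDr lerDl sqr_ge0.
Qed.

Lemma phi_gt0 (u : R) : 0 < phi u.
Proof.
rewrite /phi; case: ifP => h; first exact: expR_gt0.
by move/negbT: h; rewrite -leNgt => h; apply: (lt_le_trans (@ltr01 R)); rewrite lerDr.
Qed.

Lemma dphi_ge0 (u : R) : 0 <= dphi u.
Proof. by rewrite /dphi; case: ifP => // _; exact: expR_ge0. Qed.

Lemma dphi_le1 (u : R) : dphi u <= 1.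
Proof.
rewrite /dphi; case: ifP => // h; rewrite -expR0 ler_expR; exact: ltW.
Qed.

Lemma ratio_ge0 (u : R) : 0 <= dphi u / phi u.
Proof. by rewrite divr_ge0 ?dphi_ge0 ?ltW ?phi_gt0. Qed.

Lemma ratio_le1 (u : R) : dphi u / phi u <= 1.
Proof.
rewrite ler_pdivrMr ?phi_gt0 // mul1r /dphi /phi; case: ifP => // h.
by move/negbT: h; rewrite -leNgt => h; rewrite lerDr.
Qed.

Lemma dsigma_ge0 (u : R) : 0 <= dsigma u.
Proof. by rewrite /dsigma; case: ifP. Qed.

Lemma dsigma_le1 (u : R) : dsigma u <= 1.
Proof. by rewrite /dsigma; case: ifP. Qed.

Variables (k m Q : nat) (a : 'I_m -> R) (wb : 'I_m -> 'rV[R]_k.+2) (bb : 'I_m -> R).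
Hypothesis Q1 : (1 <= Q)%N.

Lemma coord_le1 n (x : 'rV[R]_n) j : ns2 x <= 1 -> `|x 0 j| <= 1.
Proof.
move=> h; have : x 0 j ^+ 2 <= 1.
  apply: le_trans h; rewrite /ns2 (bigD1 j) //= lerDl.
  by apply: sumr_ge0 => i _; rewrite sqr_ge0.
move=> h2; have h3 : `|x 0 j| ^+ 2 <= 1 by rewrite -normrX ger0_norm ?sqr_ge0.
have := normr_ge0 (x 0 j); nra.
Qed.

Lemma Qpos : 0 < (Q%:R : R).
Proof. by rewrite ltr0n. Qed.

Lemma xm_bounds (x : 'rV[R]_k.+1) : ns2 x <= 1 -> 0 <= x 0 ord_max + 1 <= 2.
Proof.
move=> h; have := coord_le1 ord_max h; rewrite ler_norml => /andP[h1 h2].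
apply/andP; split; lra.
Qed.

Lemma Delta_ge0 (x : 'rV[R]_k.+1) : ns2 x <= 1 -> 0 <= Delta Q x.
Proof.
move=> h; have /andP[h1 _] := xm_bounds h.
by rewrite /Delta divr_ge0 // ler0n.
Qed.

Lemma QDelta (x : 'rV[R]_k.+1) : Q%:R * Delta Q x = x 0 ord_max + 1.
Proof. by rewrite /Delta mulrC divfK // gt_eqF // Qpos. Qed.

Lemma jDelta (x : 'rV[R]_k.+1) j : ns2 x <= 1 -> (j <= Q)%N ->
  0 <= j%:R * Delta Q x <= 2.
Proof.
move=> h jQ; have /andP[h1 h2] := xm_bounds h.
have d0 := Delta_ge0 h.
apply/andP; split; first by rewrite mulr_ge0 ?ler0n.
apply: le_trans h2; rewrite -QDelta; apply: ler_wpM2r => //.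
by rewrite ler_nat.
Qed.

Lemma quadpt_ns2 (x : 'rV[R]_k.+1) j : ns2 x <= 1 -> (j <= Q)%N ->
  ns2 (quadpt Q x j) <= 2.
Proof.
move=> h jQ; have /andP[h1 h2] := jDelta h jQ.
have hx : \sum_(i < k) x 0 (widen_ord (leqnSn k) i) ^+ 2 <= 1.
  apply: le_trans h; rewrite /ns2 [X in _ <= X]big_ord_recr /= lerDl sqr_ge0 //.
rewrite /ns2 big_ord_recr /= (eq_bigr (fun i : 'I_k => x 0 (widen_ord (leqnSn k) i) ^+ 2)); last first.
  by move=> i _; rewrite mxE /= ltn_ord.
rewrite mxE /= ltnn.
have : (-1 + j%:R * Delta Q x) ^+ 2 <= 1 by nra.
lra.
Qed.

Lemma coef_le (D p s A : R) : 0 <= D -> 0 <= p <= 1 -> 0 <= s <= 1 ->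
  `|D * p * A * s| <= D * `|A|.
Proof.
move=> D0 /andP[p0 p1] /andP[s0 s1].
rewrite !normrM (ger0_norm D0) (ger0_norm p0) (ger0_norm s0).
have t0 : 0 <= D * `|A| by rewrite mulr_ge0.
have ps : p * s <= 1 by nra.
have -> : D * p * `|A| * s = D * `|A| * (p * s) by ring.
by rewrite ler_piMr // mulr_ge0.
Qed.

Lemma coef0_le (p s A : R) : 0 <= p <= 1 -> 0 <= s <= 1 -> `|p * A * s| <= `|A|.
Proof.
move=> h1 h2; have := coef_le A ler01 h1 h2; rewrite mul1r mul1r; apply.
Qed.

Lemma sum_coef_le (x : 'rV[R]_k.+1) (A : R) (f g : nat -> R) : ns2 x <= 1 ->
  (forall j, 0 <= f j <= 1) -> (forall j, 0 <= g j <= 1) ->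
  \sum_(1 <= j < Q.+1) `|Delta Q x * f j * A * g j| <= 2 * `|A|.
Proof.
move=> hx hf hg.
apply: le_trans (ler_sum_nat (G := fun _ => Delta Q x * `|A|) _) _.
  by move=> j _; apply: coef_le; rewrite ?Delta_ge0.
rewrite sumr_const_nat subn1 /= -[_ *+ Q]mulr_natr.
have -> : Delta Q x * `|A| * Q%:R = (Q%:R * Delta Q x) * `|A| by ring.
rewrite QDelta.
have /andP[_ h2] := xm_bounds hx.
by apply: ler_wpM2r.
Qed.

Lemma dphiB (u : R) : 0 <= dphi u <= 1.
Proof. by rewrite dphi_ge0 dphi_le1. Qed.
Lemma dsigmaB (u : R) : 0 <= dsigma u <= 1.
Proof. by rewrite dsigma_ge0 dsigma_le1. Qed.
Lemma ratioB (u : R) : 0 <= dphi u / phi u <= 1.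
Proof. by rewrite ratio_ge0 ratio_le1. Qed.

Lemma gradb_le (th : block R k.+2 m) (x : 'rV[R]_k.+1) r : ns2 x <= 1 ->
  `|gradb Q a wb bb th x r| <= 6 * `|a r|.
Proof.
move=> hx; rewrite /gradb; apply: le_trans (ler_normB _ _) _.
have h1 := @sum_coef_le x (a r) (fun j => dphi (Nnet a wb bb th (hatv (quadpt Q x j))))
  (fun j => dsigma (preact wb bb th r (hatv (quadpt Q x j)))) hx (fun j => dphiB _) (fun j => dsigmaB _).
apply: le_trans (lerD (le_trans (ler_norm_sum _ _ _) h1) (lexx _)) _.
have := coef0_le (a r) (ratioB (Nnet a wb bb th (hatv x))) (dsigmaB (preact wb bb th r (hatv x))).
have := normr_ge0 (a r); lra.
Qed.

Lemma norm2_hatv_le n (z : 'rV[R]_n.+1) : ns2 z <= 3 -> norm2 (hatv z) <= 2.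
Proof.
move=> h; apply: norm2_le => //; apply: le_trans (hatv_ns2 z) _; lra.
Qed.

Lemma gradw_le (th : block R k.+2 m) (x : 'rV[R]_k.+1) r : ns2 x <= 1 ->
  norm2 (gradw Q a wb bb th x r) <= 6 * `|a r|.
Proof.
move=> hx; rewrite /gradw; apply: le_trans (norm2B _ _) _.
apply: le_trans (lerD (norm2_sum _ _ _) (lexx _)) _.
rewrite norm2Z.
have h1 := @sum_coef_le x (a r) (fun j => dphi (Nnet a wb bb th (hatv (quadpt Q x j))))
  (fun j => dsigma (preact wb bb th r (hatv (quadpt Q x j)))) hx (fun j => dphiB _) (fun j => dsigmaB _).
have h0 := coef0_le (a r) (ratioB (Nnet a wb bb th (hatv x))) (dsigmaB (preact wb bb th r (hatv x))).
have hh0 : norm2 (hatv x) <= 2 by apply: norm2_hatv_le; lra.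
have e : \sum_(1 <= j < Q.+1) norm2 ((Delta Q x * dphi (Nnet a wb bb th (hatv (quadpt Q x j))) * a r
        * dsigma (preact wb bb th r (hatv (quadpt Q x j)))) *: hatv (quadpt Q x j))
   <= \sum_(1 <= j < Q.+1) `|Delta Q x * dphi (Nnet a wb bb th (hatv (quadpt Q x j))) * a r
        * dsigma (preact wb bb th r (hatv (quadpt Q x j)))| * 2.
  apply: ler_sum_nat => j /andP[_ jQ]; rewrite norm2Z ler_wpM2l //.
  apply: norm2_hatv_le; have := quadpt_ns2 hx jQ; lra.
rewrite -mulr_suml in e.
have := normr_ge0 (a r).
have := norm2_ge0 (hatv x).
move=> _ _.
have hc : `|dphi (Nnet a wb bb th (hatv x)) / phi (Nnet a wb bb th (hatv x)) * a r *
   dsigma (preact wb bb th r (hatv x))| * norm2 (hatv x) <= `|a r| * 2.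
  by apply: ler_pM => //; rewrite ?normr_ge0 ?norm2_ge0.
have := le_trans e (ler_wpM2r (ler0n _ 2) h1).
lra.
Qed.

End Grad.

Section SGDb.
Variable R : realType.

Lemma prefix_ns2 d (k : 'I_d) (x : 'rV[R]_d) : ns2 (Defs.prefix k x) <= ns2 x.
Proof.
rewrite /ns2 [X in _ <= X](bigID (fun j : 'I_d => (j < k.+1)%N)) /=.
rewrite (big_ord_narrow (ltn_ord k)).
rewrite (eq_bigr (fun j : 'I_k.+1 => x 0 (widen_ord (ltn_ord k) j) ^+ 2)); last first.
  by move=> j _; rewrite mxE.
by rewrite lerDl sumr_ge0 // => j _; rewrite sqr_ge0.
Qed.

Lemma ns2_le1 n (v : 'rV[R]_n) : norm2 v <= 1 -> ns2 v <= 1.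
Proof. move=> h; rewrite -sqr_norm2; have := norm2_ge0 v; nra. Qed.

Lemma sgd_bound d m Q (a : 'I_d -> 'I_m -> R) (wb : forall k : 'I_d, 'I_m -> 'rV[R]_k.+2)
  (bb : 'I_d -> 'I_m -> R) (eta : R) (xs : nat -> 'rV[R]_d) :
  (1 <= Q)%N -> 0 < eta -> (forall s, norm2 (xs s) <= 1) ->
  forall t k r,
    norm2 ((sgd Q a wb bb eta xs t) k r).1 <= eta * (6 * `|a k r|) * t%:R /\
    `|((sgd Q a wb bb eta xs t) k r).2| <= eta * (6 * `|a k r|) * t%:R.
Proof.
move=> Q1 eta0 hxs; elim=> [|t IH] k r.
  by rewrite /= norm2_0 normr0 mulr0; split.
have [IH1 IH2] := IH k r.
have hx : ns2 (Defs.prefix k (xs t)) <= 1.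
  exact: le_trans (prefix_ns2 k (xs t)) (ns2_le1 (hxs t)).
have g1 := gradw_le (a k) (wb k) (bb k) Q1 ((sgd Q a wb bb eta xs t) k) r hx.
have g2 := gradb_le (a k) (wb k) (bb k) Q1 ((sgd Q a wb bb eta xs t) k) r hx.
rewrite /= /gradL /=.
have -> : eta * (6 * `|a k r|) * t.+1%:R = eta * (6 * `|a k r|) * t%:R + eta * (6 * `|a k r|).
  by rewrite -natr1; ring.
split.
  apply: le_trans (norm2B _ _) _; rewrite norm2Z (gtr0_norm eta0).
  by apply: lerD => //; rewrite ler_pM2l.
apply: le_trans (ler_normB _ _) _; rewrite normrM (gtr0_norm eta0).
by apply: lerD => //; rewrite ler_pM2l.
Qed.

End SGDb.
Local Open Scope classical_set_scope.
Section Tail.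
Variable R : realType.

Lemma fun_shift (sig s x : R) : 0 < sig -> 0 <= s -> s <= `|x| ->
  normal_fun 0 sig x <=
  expR (- s ^+ 2 / (sig ^+ 2 *+ 2)) *
    (normal_fun s sig x + normal_fun (- s) sig x).
Proof.
move=> sig0 s0 hx.
have D0 : 0 < (sig ^+ 2 *+ 2)^-1 by rewrite invr_gt0 pmulrn_lgt0 // exprn_gt0.
set Di := (sig ^+ 2 *+ 2)^-1 in D0.
have key : forall c, c ^+ 2 = s ^+ 2 -> s ^+ 2 + (x - c) ^+ 2 <= (x - 0) ^+ 2 ->
   normal_fun 0 sig x <= expR (- s ^+ 2 / (sig ^+ 2 *+ 2)) * normal_fun c sig x.
  move=> c hc h; rewrite /normal_fun -expRD ler_expR -/Di.
  rewrite !mulNr -opprD lerN2 -mulrDl ler_pM2r //.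
have e0 := expR_ge0 (- s ^+ 2 / (sig ^+ 2 *+ 2)).
have f1 := normal_fun_ge0 s sig x.
have f2 := normal_fun_ge0 (- s) sig x.
have p1 := mulr_ge0 e0 f1.
have p2 := mulr_ge0 e0 f2.
have [xpos|xneg] := leP 0 x.
  rewrite ger0_norm // in hx.
  have := key s erefl; rewrite subr0; move=> /(_ ltac:(nra)).
  nra.
rewrite ltr0_norm // in hx.
have := key (- s) (sqrrN s); rewrite subr0; move=> /(_ ltac:(nra)).
nra.
Qed.

Lemma tail_bound (sig s : R) : 0 < sig -> 0 <= s ->
  (normal_prob 0 sig (~` `[(- s)%R, s]%classic) <=
   (2 * expR (- s ^+ 2 / (sig ^+ 2 *+ 2)))%:E)%E.
Proof.
move=> sig0 s0.
set q := expR (- s ^+ 2 / (sig ^+ 2 *+ 2)).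
have q0 : 0 <= q by exact: expR_ge0.
have mB : measurable (~` `[(- s)%R, s]%classic : set R) by apply: measurableC.
rewrite /normal_prob.
apply: (@le_trans _ _ (\int[lebesgue_measure]_(x in ~` `[(- s)%R, s]%classic)
   ((q * normal_pdf s sig x)%:E + (q * normal_pdf (- s)%R sig x)%:E))%E).
  apply: ge0_le_integral => //.
  - by move=> x _; rewrite lee_fin normal_pdf_ge0.
  - by apply/measurable_EFinP; apply: measurable_funTS; exact: measurable_normal_pdf.
  - apply: emeasurable_funD; apply/measurable_EFinP; apply: measurable_funM => //;
      apply: measurable_funTS; exact: measurable_normal_pdf.
  - move=> x hx; rewrite -EFinD lee_fin -GRing.mulrDr.
    have sg : sig != 0 by rewrite gt_eqF.
    rewrite !normal_pdfE //=.
    have hx' : s <= `|x|.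
      rewrite leNgt; apply/negP => h; apply: hx => /=.
      by rewrite in_itv /=; move: h; rewrite ltr_norml => /andP[h1 h2]; rewrite !ltW.
    have := fun_shift sig0 s0 hx'; rewrite -/q => h.
    have pk := normal_peak_ge0 sig.
    have := ler_wpM2l pk h; rewrite -GRing.mulrDr; nra.
rewrite ge0_integralD //; first last.
- apply/measurable_EFinP; apply: measurable_funM => //;
    apply: measurable_funTS; exact: measurable_normal_pdf.
- by move=> x _; rewrite lee_fin mulr_ge0 // normal_pdf_ge0.
- apply/measurable_EFinP; apply: measurable_funM => //;
    apply: measurable_funTS; exact: measurable_normal_pdf.
- by move=> x _; rewrite lee_fin mulr_ge0 // normal_pdf_ge0.
under eq_integral do rewrite EFinM.
under [X in (_ + X)%E]eq_integral do rewrite EFinM.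
rewrite (ge0_integralZl (f := fun x => (normal_pdf s sig x)%:E) lebesgue_measure mB) //; first last.
- by move=> x _; rewrite lee_fin normal_pdf_ge0.
- by apply/measurable_EFinP; apply: measurable_funTS; exact: measurable_normal_pdf.
rewrite (ge0_integralZl (f := fun x => (normal_pdf (- s)%R sig x)%:E) lebesgue_measure mB) //; first last.
- by move=> x _; rewrite lee_fin normal_pdf_ge0.
- by apply/measurable_EFinP; apply: measurable_funTS; exact: measurable_normal_pdf.
have h1 := probability_le1 (normal_prob s sig) mB.
have h2 := probability_le1 (normal_prob (- s)%R sig) mB.
rewrite /normal_prob in h1 h2.
rewrite -muleDr //; last by apply: ge0_adde_def; rewrite inE; apply: integral_ge0 => x _; rewrite lee_fin normal_pdf_ge0.
rewrite mulrC EFinM; apply: lee_pmul => //.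
  by apply: adde_ge0; apply: integral_ge0 => x _; rewrite lee_fin normal_pdf_ge0.
by rewrite -[2%:E]/((1 + 1)%:E) EFinD; apply: leeD.
Qed.

End Tail.

Lemma ln_ge_half (R : realType) (m : nat) : (2 <= m)%N -> 1 / 2 <= ln (m%:R : R).
Proof.
move=> m2.
have mpos : (0 : R) < m%:R by rewrite ltr0n; apply: leq_trans m2.
have h := expR_ge1Dx (- ln (m%:R : R)).
rewrite expRN lnK ?posrE // in h.
have h2 : (2%:R : R) <= m%:R by rewrite ler_nat.
have : (m%:R : R)^-1 <= 2^-1.
  by rewrite lef_pV2 ?posrE //; lra.
lra.
Qed.

Lemma numeric (R : realType) (m : nat) (c1 eps : R) : (2 <= m)%N -> 10 <= c1 -> 0 < eps ->
  2 * expR (- (c1 * eps * Num.sqrt (2 * ln (m%:R : R))) ^+ 2 / (eps ^+ 2 *+ 2)) <= c1^-1.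
Proof.
move=> m2 c10 eps0.
have L := ln_ge_half R m2.
set l := ln (m%:R : R) in L *.
have e : (c1 * eps * Num.sqrt (2 * l)) ^+ 2 / (eps ^+ 2 *+ 2) = c1 ^+ 2 * l.
  rewrite exprMn sqr_sqrtr; last by lra.
  rewrite -mulr_natr; field.
  by rewrite gt_eqF // exprn_gt0.
rewrite mulNr e expRN.
have hy := expR_ge1Dx (c1 ^+ 2 * l).
have ep : 0 < expR (c1 ^+ 2 * l) := expR_gt0 _.
have c1p : 0 < c1 by lra.
rewrite -[X in _ <= X]div1r ler_pdivlMr // mulrAC ler_pdivrMr // mul1r.
have : 2 * c1 <= 1 + c1 ^+ 2 * l.
  have : c1 ^+ 2 / 2 <= c1 ^+ 2 * l by rewrite ler_pM2l ?exprn_gt0 // ; lra.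
  nra.
lra.
Qed.

Unset Implicit Arguments.
Set Strict Implicit.

Theorem lemma1 (R : realType) (dsp : measure_display) (T : measurableType dsp)
    (P : probability T R) (d m Q : nat) (eps_a : R)
    (X : init_idx d m -> T -> R) :
  (2 <= m)%N -> 0 < eps_a -> (1 <= Q)%N ->
  mutually_independent P X ->
  (forall k r, gaussian0 P (X (IA k r)) (eps_a ^+ 2)) ->
  (forall k r j, gaussian0 P (X (IW k r j)) (m%:R^-1)) ->
  (forall k r, gaussian0 P (X (IB k r)) (m%:R^-1)) ->
  forall (k : 'I_d) (r : 'I_m) (c1 : R), 10 <= c1 ->
  forall x : 'rV[R]_k.+1, norm2 x <= 1 / 2 ->
  forall (eta : R), 0 < eta ->
  forall (xs : nat -> 'rV[R]_d), (forall s, norm2 (xs s) <= 1) ->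
  forall t : nat,
  let Lambda := 6 * c1 * eps_a * Num.sqrt (2 * ln m%:R) in
  exists E : set T, measurable E /\ ((1 - c1^-1)%:E <= P E)%E /\
    forall w, E w ->
      let th := sgd Q (init_a X w) (init_w X w) (init_b X w) eta xs t in
      norm2 (th k r).1 <= eta * Lambda * t%:R /\
      `|(th k r).2| <= eta * Lambda * t%:R.
Proof.
move=> m2 eps0 Q1 _ hA _ _ k r c1 c1ge x _ eta eta0 xs hxs t Lambda.
set s := c1 * eps_a * Num.sqrt (2 * ln (m%:R : R)).
have s0 : 0 <= s by rewrite mulr_ge0 ?sqrtr_ge0 // mulr_ge0 //; lra.
have [mY hPY] := hA k r.
set Y := X (IA k r) in mY hPY.
have mB : measurable (`[(- s)%R, s]%classic : set R) by exact: measurable_itv.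
exists (Y @^-1` `[(- s)%R, s]%classic); split.
  by have := mY measurableT _ mB; rewrite setTI.
split.
  rewrite hPY // sqrtr_sqr gtr0_norm //.
  rewrite -[X in normal_prob _ _ X]setCK probability_setC; last exact: measurableC.
  rewrite EFinB; apply: leeB => //.
  apply: le_trans (tail_bound eps0 s0) _.
  by rewrite lee_fin; exact: numeric.
move=> w hw th.
have ha : `|init_a X w k r| <= s.
  move: hw; rewrite /= in_itv /= => /andP[h1 h2].
  by rewrite /init_a ler_norml h1 h2.
have [b1 b2] := sgd_bound (init_a X w) (init_w X w) (init_b X w) Q1 eta0 hxs t k r.
have hL : eta * (6 * `|init_a X w k r|) * t%:R <= eta * Lambda * t%:R.
  apply: ler_wpM2r; first exact: ler0n.
  rewrite ler_pM2l // /Lambda.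
  have -> : 6 * c1 * eps_a * Num.sqrt (2 * ln (m%:R : R)) = 6 * s by rewrite /s; ring.
  by rewrite ler_pM2l.
split; exact: le_trans hL.
Qed.
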